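(* Let $(\mathfrak A,\mathfrak A_0)$ be a Banach quasi *-algebra with unit $e$. The following are equivalent: (i) $\mathcal R_c(\mathfrak A,\mathfrak A_0)$ is sufficient; (ii) $(\mathfrak A,\mathfrak A_0)$ is fully representable. If moreover the positivity condition (P) holds, then (i) and (ii) are also equivalent to: (iii) $(\mathfrak A,\mathfrak A_0)$ is *-semisimple.
   Context: A quasi *-algebra $(\mathfrak A,\mathfrak A_0)$ consists of a complex vector space $\mathfrak A$ and a *-algebra $\mathfrak A_0$ which is a linear subspace of $\mathfrak A$, such that: $\mathfrak A$ carries an involution $a\mapsto a^*$ extending that of $\mathfrak A_0$; $\mathfrak A$ is a bimodule over $\mathfrak A_0$ whose module multiplications extend the multiplication of $\mathfrak A_0$, with $(xa)y=x(ay)$ and $a(xy)=(ax)y$ for all $a\in\mathfrak A$, $x,y\in\mathfrak A_0$; and $(ax)^*=x^*a^*$ for all $a\in\mathfrak A$, $x\in\mathfrak A_0$. A unit is an element $e\in\mathfrak A_0$ with $ae=ea=a$ for all $a\in\mathfrak A$. A normed quasi *-algebra is a quasi *-algebra with a norm $\|\cdot\|$ on $\mathfrak A$ such that $\|a^*\|=\|a\|$ for all $a$, $\mathfrak A_0$ is dense in $\mathfrak A$, and for each $x\in\mathfrak A_0$ the map $a\mapsto ax$ is continuous on $\mathfrak A$ (hence so is $a\mapsto xa$). It is a Banach quasi *-algebra if $(\mathfrak A,\|\cdot\|)$ is complete. A linear functional $\omega$ on $\mathfrak A$ is representable if (L.1) $\omega(x^*x)\ge0$ for all $x\in\mathfrak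 A_0$; (L.2) $\omega(y^*a^*x)=\overline{\omega(x^*ay)}$ for all $x,y\in\mathfrak A_0$, $a\in\mathfrak A$; (L.3) for every $a\in\mathfrak A$ there is $\gamma_a>0$ with $|\omega(a^*x)|\le\gamma_a\,\omega(x^*x)^{1/2}$ for all $x\in\mathfrak A_0$. $\mathcal R_c(\mathfrak A,\mathfrak A_0)$ is the set of norm-continuous representable functionals. For $\omega\in\mathcal R_c(\mathfrak A,\mathfrak A_0)$, $\varphi_\omega(x,y)=\omega(y^*x)$ on $\mathfrak A_0\times\mathfrak A_0$ is closable (i.e. $\varphi_\omega(x_n,x_n)\to0$ whenever $(x_n)\subset\mathfrak A_0$, $\|x_n\|\to0$ and $\varphi_\omega(x_n-x_m,x_n-x_m)\to0$); its closure $\overline{\varphi}_\omega$ has domain $D(\overline{\varphi}_\omega)$ consisting of those $a\in\mathfrak A$ admitting $(x_n)\subset\mathfrak A_0$ with $\|x_n-a\|\to0$ and $\varphi_\omega(x_n-x_m,x_n-x_m)\to0$. Set $\mathfrak A_{\mathcal R}=\bigcap_{\omega\in\mathcal R_c(\mathfrak A,\mathfrak A_0)}D(\overline{\varphi}_\omega)$ (and $\mathfrak A_{\mathcal R}=\mathfrak A$ if $\mathcal R_c=\{0\}$). $\mathfrak A_0^+=\{\sum_{k=1}^n x_k^*x_k: x_k\in\mathfrak A_0,n\in\mathbb N\}$ and $\mathfrak A^+$ is its norm closure (its elements are called positive, written $a\ge0$). $\mathcal R_c(\mathfrak A,\mathfrak A_0)$ is sufficient if for every $a\in\mathfrak A^+$,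 $a\ne0$, there is $\omega\in\mathcal R_c(\mathfrak A,\mathfrak A_0)$ with $\omega(a)>0$. $(\mathfrak A,\mathfrak A_0)$ is fully representable if $\mathcal R_c(\mathfrak A,\mathfrak A_0)$ is sufficient and $\mathfrak A_{\mathcal R}=\mathfrak A$. $\mathcal S_{\mathfrak A_0}(\mathfrak A)$ is the set of sesquilinear forms $\Omega$ on $\mathfrak A\times\mathfrak A$ with $\Omega(a,a)\ge0$, $\Omega(ax,y)=\Omega(x,a^*y)$ ($a\in\mathfrak A$, $x,y\in\mathfrak A_0$) and $|\Omega(a,b)|\le\|a\|\|b\|$ for all $a,b\in\mathfrak A$. $(\mathfrak A,\mathfrak A_0)$ is *-semisimple if for every $a\neq0$ there is $\Omega\in\mathcal S_{\mathfrak A_0}(\mathfrak A)$ with $\Omega(a,a)>0$. Condition (P): if $a\in\mathfrak A$ and $\omega(x^*ax)\ge0$ for every $\omega\in\mathcal R_c(\mathfrak A,\mathfrak A_0)$ and every $x\in\mathfrak A_0$, then $a\in\mathfrak A^+$. *)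

(* Defs.v *)
From Stdlib Require Import Reals List.
Open Scope R_scope.

Definition C : Type := (R * R)%type.
Definition Re (z : C) : R := fst z.
Definition Im (z : C) : R := snd z.
Definition C0 : C := (0, 0).
Definition C1 : C := (1, 0).
Definition Cadd (z w : C) : C := (Re z + Re w, Im z + Im w).
Definition Cmul (z w : C) : C :=
  (Re z * Re w - Im z * Im w, Re z * Im w + Im z * Re w).
Definition Cconj (z : C) : C := (Re z, - Im z).
Definition Cabs (z : C) : R := sqrt (Re z * Re z + Im z * Im z).
Definition Cnonneg (z : C) : Prop := Im z = 0 /\ 0 <= Re z.
Definition Cpos (z : C) : Prop := Im z = 0 /\ 0 < Re z.

(** The module multiplications
    (and the product of A_0) are encoded by one total operation [mul]; only its
    values with at least one factor in A_0 are constrained (and used). *)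
Record BanachQSA : Type := {
  car :> Type;
  add : car -> car -> car;
  zero : car;
  opp : car -> car;
  scal : C -> car -> car;
  star : car -> car;
  mul : car -> car -> car;
  A0 : car -> Prop;
  norm : car -> R;
  add_assoc : forall a b c, add a (add b c) = add (add a b) c;
  add_comm : forall a b, add a b = add b a;
  add_zero : forall a, add a zero = a;
  add_opp : forall a, add a (opp a) = zero;
  scal_one : forall a, scal C1 a = a;
  scal_mul : forall l m a, scal (Cmul l m) a = scal l (scal m a);
  scal_addl : forall l m a, scal (Cadd l m) a = add (scal l a) (scal m a);
  scal_addr : forall l a b, scal l (add a b) = add (scal l a) (scal l b);
  A0_zero : A0 zero;
  A0_add : forall x y, A0 x -> A0 y -> A0 (add x y);
  A0_scal : forall l x, A0 x -> A0 (scal l x);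
  A0_mul : forall x y, A0 x -> A0 y -> A0 (mul x y);
  A0_star : forall x, A0 x -> A0 (star x);
  mul_addl_r : forall a b x, A0 x -> mul (add a b) x = add (mul a x) (mul b x);
  mul_addr_r : forall a x y, A0 x -> A0 y -> mul a (add x y) = add (mul a x) (mul a y);
  mul_scal_r : forall l a x, A0 x -> mul (scal l a) x = scal l (mul a x);
  mul_scalr_r : forall l a x, A0 x -> mul a (scal l x) = scal l (mul a x);
  mul_addl_l : forall x y a, A0 x -> A0 y -> mul (add x y) a = add (mul x a) (mul y a);
  mul_addr_l : forall x a b, A0 x -> mul x (add a b) = add (mul x a) (mul x b);
  mul_scal_l : forall l x a, A0 x -> mul x (scal l a) = scal l (mul x a);
  mul_scall_l : forall l x a, A0 x -> mul (scal l x) a = scal l (mul x a);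
  mul_assoc_mid : forall a x y, A0 x -> A0 y -> mul (mul x a) y = mul x (mul a y);
  mul_assoc_r : forall a x y, A0 x -> A0 y -> mul a (mul x y) = mul (mul a x) y;
  mul_assoc_l : forall a x y, A0 x -> A0 y -> mul (mul x y) a = mul x (mul y a);
  star_add : forall a b, star (add a b) = add (star a) (star b);
  star_scal : forall l a, star (scal l a) = scal (Cconj l) (star a);
  star_star : forall a, star (star a) = a;
  star_mul : forall a x, A0 x -> star (mul a x) = mul (star x) (star a);
  norm_nonneg : forall a, 0 <= norm a;
  norm_eq0 : forall a, norm a = 0 -> a = zero;
  norm_scal : forall l a, norm (scal l a) = Cabs l * norm a;
  norm_triangle : forall a b, norm (add a b) <= norm a + norm b;
  norm_star : forall a, norm (star a) = norm a;
  A0_dense : forall a eps, 0 < eps -> exists x, A0 x /\ norm (add a (opp x)) < eps;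
  mul_r_cont : forall x, A0 x -> forall a eps, 0 < eps ->
    exists delta, 0 < delta /\ forall b, norm (add b (opp a)) < delta ->
      norm (add (mul b x) (opp (mul a x))) < eps;
  complete : forall u : nat -> car,
    (forall eps, 0 < eps -> exists N, forall n m, (N <= n)%nat -> (N <= m)%nat ->
        norm (add (u n) (opp (u m))) < eps) ->
    exists l, forall eps, 0 < eps -> exists N, forall n, (N <= n)%nat ->
        norm (add (u n) (opp l)) < eps
}.

Arguments add {_}. Arguments zero {_}. Arguments opp {_}. Arguments scal {_}.
Arguments star {_}. Arguments mul {_}. Arguments A0 {_}. Arguments norm {_}.

Section Notions.
Variable Q : BanachQSA.

Definition sub (a b : Q) : Q := add a (opp b).

Definition is_unit (e : Q) : Prop := A0 e /\ forall a : Q, mul a e = a /\ mul e a = a.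

Definition linear_functional (w : Q -> C) : Prop :=
  (forall a b, w (add a b) = Cadd (w a) (w b)) /\
  (forall l a, w (scal l a) = Cmul l (w a)).

Definition norm_continuous (w : Q -> C) : Prop :=
  forall a eps, 0 < eps -> exists delta, 0 < delta /\
    forall b, norm (sub b a) < delta -> Cabs (Cadd (w b) (Cmul (-1, 0) (w a))) < eps.

Definition representable (w : Q -> C) : Prop :=
  linear_functional w /\
  (forall x, A0 x -> Cnonneg (w (mul (star x) x))) /\
  (forall x y a, A0 x -> A0 y ->
     w (mul (mul (star y) (star a)) x) = Cconj (w (mul (mul (star x) a) y))) /\
  (forall a, exists g, 0 < g /\ forall x, A0 x ->
     Cabs (w (mul (star a) x)) <= g * sqrt (Re (w (mul (star x) x)))).

Definition Rc (w : Q -> C) : Prop := representable w /\ norm_continuous w.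

(** domain of the closure of phi_w(x,y) = w(y^* x) *)
Definition closure_domain (w : Q -> C) (a : Q) : Prop :=
  exists xs : nat -> Q, (forall n, A0 (xs n)) /\
    (forall eps, 0 < eps -> exists N, forall n, (N <= n)%nat -> norm (sub (xs n) a) < eps) /\
    (forall eps, 0 < eps -> exists N, forall n m, (N <= n)%nat -> (N <= m)%nat ->
       Cabs (w (mul (star (sub (xs n) (xs m))) (sub (xs n) (xs m)))) < eps).

Definition A_R (a : Q) : Prop :=
  (forall w, Rc w -> forall b, w b = C0) \/
  (forall w, Rc w -> closure_domain w a).

Definition A0plus (a : Q) : Prop :=
  exists l : list Q, l <> nil /\ Forall (fun x => A0 x) l /\
    a = fold_right (fun x s => add (mul (star x) x) s) zero l.

Definition Aplus (a : Q) : Prop :=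
  forall eps, 0 < eps -> exists p, A0plus p /\ norm (sub a p) < eps.

Definition Rc_sufficient : Prop :=
  forall a, Aplus a -> a <> zero -> exists w, Rc w /\ Cpos (w a).

Definition fully_representable : Prop :=
  Rc_sufficient /\ forall a, A_R a.

Definition in_S (Om : Q -> Q -> C) : Prop :=
  (forall a b c, Om (add a b) c = Cadd (Om a c) (Om b c)) /\
  (forall l a c, Om (scal l a) c = Cmul l (Om a c)) /\
  (forall a b c, Om a (add b c) = Cadd (Om a b) (Om a c)) /\
  (forall l a c, Om a (scal l c) = Cmul (Cconj l) (Om a c)) /\
  (forall a, Cnonneg (Om a a)) /\
  (forall a x y, A0 x -> A0 y -> Om (mul a x) y = Om x (mul (star a) y)) /\
  (forall a b, Cabs (Om a b) <= norm a * norm b).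

Definition star_semisimple : Prop :=
  forall a, a <> zero -> exists Om, in_S Om /\ Cpos (Om a a).

Definition condition_P : Prop :=
  forall a, (forall w, Rc w -> forall x, A0 x -> Cnonneg (w (mul (mul (star x) a) x))) ->
    Aplus a.

End Notions.

(* Main.v *)
Require Import Defs.
From Stdlib Require Import Reals List.
From Stdlib Require Import Lra Psatz Classical ClassicalEpsilon.
Require Import Defs.
Open Scope R_scope.

Ltac cdes := repeat match goal with z : C |- _ => destruct z end.
Ltac cunf := unfold Cadd, Cmul, Cconj, Re, Im, C0, C1, Cnonneg, Cpos in *; simpl in *.

Lemma sqrt_le_of_sq a b : 0 <= b -> a <= b * b -> sqrt a <= b.
Proof.
  intros Hb H. destruct (Rle_or_lt a 0) as [Ha|Ha].
  - rewrite (sqrt_neg_0 a Ha). lra.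
  - rewrite <- (sqrt_square b Hb). apply sqrt_le_1_alt. lra.
Qed.

Lemma Cabs_nonneg z : 0 <= Cabs z.
Proof. unfold Cabs. apply sqrt_pos. Qed.

Lemma Cabs_mul z w : Cabs (Cmul z w) = Cabs z * Cabs w.
Proof.
  cdes. unfold Cabs; cunf. rewrite <- sqrt_mult_alt by nra. f_equal. ring.
Qed.

Lemma Cabs_conj z : Cabs (Cconj z) = Cabs z.
Proof. cdes. unfold Cabs; cunf. f_equal. ring. Qed.

Lemma Cabs_Re z : Rabs (Re z) <= Cabs z.
Proof.
  cdes. unfold Cabs; cunf. rewrite <- sqrt_Rsqr_abs. apply sqrt_le_1_alt.
  unfold Rsqr. nra.
Qed.

Lemma Cabs_Im z : Rabs (Im z) <= Cabs z.
Proof.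
  cdes. unfold Cabs; cunf. rewrite <- sqrt_Rsqr_abs. apply sqrt_le_1_alt.
  unfold Rsqr. nra.
Qed.

Lemma Cabs_le_sum z : Cabs z <= Rabs (Re z) + Rabs (Im z).
Proof.
  destruct z as [r r0]. unfold Cabs; cunf. apply sqrt_le_of_sq.
  - pose proof (Rabs_pos r); pose proof (Rabs_pos r0); lra.
  - pose proof (Rabs_pos r); pose proof (Rabs_pos r0).
    assert (Rabs r * Rabs r = r*r) by (rewrite <- Rabs_mult; apply Rabs_right; nra).
    assert (Rabs r0 * Rabs r0 = r0*r0) by (rewrite <- Rabs_mult; apply Rabs_right; nra).
    nra.
Qed.

Lemma Cabs_triangle z w : Cabs (Cadd z w) <= Cabs z + Cabs w.
Proof.
  destruct z as [r1 r2]; destruct w as [r r0]. unfold Cabs; cunf.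
  set (a := sqrt (r1 * r1 + r2 * r2)). set (b := sqrt (r * r + r0 * r0)).
  assert (Ha : 0 <= a) by apply sqrt_pos. assert (Hb : 0 <= b) by apply sqrt_pos.
  assert (Ha2 : a * a = r1 * r1 + r2 * r2) by (apply sqrt_sqrt; nra).
  assert (Hb2 : b * b = r * r + r0 * r0) by (apply sqrt_sqrt; nra).
  apply sqrt_le_of_sq; [lra|].
  assert (r1 * r + r2 * r0 <= a * b).
  { assert ((r1 * r + r2 * r0) * (r1 * r + r2 * r0) <= (a*b)*(a*b)).
    { replace ((a*b)*(a*b)) with ((a*a)*(b*b)) by ring. rewrite Ha2, Hb2.
      pose proof (Rle_0_sqr (r1*r0 - r2*r)); unfold Rsqr in *; nra. }
    assert (0 <= a*b) by (apply Rmult_le_pos; auto).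
    nra. }
  nra.
Qed.

Lemma Cabs_zero : Cabs C0 = 0.
Proof. unfold Cabs; cunf. replace (0*0+0*0) with 0 by ring. apply sqrt_0. Qed.

Lemma Cabs_real r : Cabs (r, 0) = Rabs r.
Proof.
  unfold Cabs; cunf. replace (r * r + 0 * 0) with (Rsqr r) by (unfold Rsqr; ring).
  apply sqrt_Rsqr_abs.
Qed.

Lemma Rabs0 x : Rabs x = 0 -> x = 0.
Proof. intros H. destruct (Req_dec x 0); auto. exfalso; apply (Rabs_no_R0 x); auto. Qed.

Lemma Cabs_small_0 z : (forall eps, 0 < eps -> Cabs z < eps) -> z = C0.
Proof.
  intros H. destruct z as [x y].
  assert (Hx : Rabs x = 0).
  { destruct (Rle_lt_or_eq_dec 0 (Rabs x) (Rabs_pos x)) as [h|h]; [|auto].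
    specialize (H _ h). pose proof (Cabs_Re (x, y)). simpl in *. lra. }
  assert (Hy : Rabs y = 0).
  { destruct (Rle_lt_or_eq_dec 0 (Rabs y) (Rabs_pos y)) as [h|h]; [|auto].
    specialize (H _ h). pose proof (Cabs_Im (x, y)). simpl in *. lra. }
  apply Rabs0 in Hx. apply Rabs0 in Hy. subst. reflexivity.
Qed.

Lemma Cabs_0_eq z : Cabs z = 0 -> z = C0.
Proof. intros H. apply Cabs_small_0. intros. lra. Qed.

Definition Cminus (z w : C) : C := Cadd z (Cmul (-1, 0) w).

Arguments add_assoc {_}.
Arguments add_comm {_}.
Arguments add_zero {_}.
Arguments add_opp {_}.
Arguments scal_one {_}.
Arguments scal_mul {_}.
Arguments scal_addl {_}.
Arguments scal_addr {_}.
Arguments A0_zero {_}.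
Arguments A0_add {_}.
Arguments A0_scal {_}.
Arguments A0_mul {_}.
Arguments A0_star {_}.
Arguments mul_addl_r {_}.
Arguments mul_addr_r {_}.
Arguments mul_scal_r {_}.
Arguments mul_scalr_r {_}.
Arguments mul_addl_l {_}.
Arguments mul_addr_l {_}.
Arguments mul_scal_l {_}.
Arguments mul_scall_l {_}.
Arguments mul_assoc_mid {_}.
Arguments mul_assoc_r {_}.
Arguments mul_assoc_l {_}.
Arguments star_add {_}.
Arguments star_scal {_}.
Arguments star_star {_}.
Arguments star_mul {_}.
Arguments norm_nonneg {_}.
Arguments norm_eq0 {_}.
Arguments norm_scal {_}.
Arguments norm_triangle {_}.
Arguments norm_star {_}.
Arguments A0_dense {_}.
Arguments mul_r_cont {_}.
Arguments complete {_}.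

Lemma Cabs_m1 z : Cabs (Cmul (-1, 0) z) = Cabs z.
Proof. rewrite Cabs_mul, Cabs_real. unfold Rabs; destruct Rcase_abs; lra. Qed.

Lemma Cabs_minus_tri z w : Cabs w <= Cabs z + Cabs (Cminus z w).
Proof.
  replace w with (Cadd z (Cmul (-1,0) (Cminus z w))) at 1
    by (unfold Cminus; cdes; cunf; f_equal; ring).
  rewrite <- (Cabs_m1 (Cminus z w)). apply Cabs_triangle.
Qed.

Lemma Cabs_minus_sym z w : Cabs (Cminus z w) = Cabs (Cminus w z).
Proof.
  rewrite <- Cabs_m1. f_equal. unfold Cminus; cdes; cunf; f_equal; ring.
Qed.

Lemma arch_inv t : 0 < t -> exists K : nat, / (INR K + 1) < t.
Proof.
  intros Ht. destruct (INR_archimed t 1 Ht) as [K HK]. exists K.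
  pose proof (pos_INR K).
  apply (Rmult_lt_reg_l (INR K + 1)); [lra|]. rewrite Rinv_r by lra. nra.
Qed.

Lemma arch_nat g : exists n : nat, g < INR n.
Proof. destruct (INR_archimed 1 g) as [n Hn]; [lra|]. exists n. lra. Qed.

Fixpoint iter_seq {A : Type} (p0 : A) (f : nat -> A -> A) (k : nat) : A :=
  match k with O => p0 | S k => f k (iter_seq p0 f k) end.

Section Alg.
Variable Q : BanachQSA.
Implicit Types a b c d x y : Q.
Notation sb := (sub Q).

Lemma add_zero_l a : add zero a = a.
Proof. rewrite add_comm. apply add_zero. Qed.

Lemma add_opp_l a : add (opp a) a = zero.
Proof. rewrite add_comm. apply add_opp. Qed.

Lemma add_cancel_l a b c : add a b = add a c -> b = c.
Proof.
  intros H. rewrite <- (add_zero_l b), <- (add_zero_l c), <- (add_opp_l a).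
  rewrite <- !add_assoc, H. reflexivity.
Qed.

Lemma uniq_inv a b : add a b = zero -> b = opp a.
Proof. intros H. apply (add_cancel_l a). rewrite H, add_opp. reflexivity. Qed.

Lemma Cadd00 : Cadd C0 C0 = C0.
Proof. cunf. f_equal; ring. Qed.

Lemma scal_C0 a : scal C0 a = zero.
Proof.
  apply (add_cancel_l (scal C0 a)). rewrite add_zero, <- scal_addl, Cadd00. reflexivity.
Qed.

Definition m1 : C := (-1, 0).

Lemma opp_scal a : opp a = scal m1 a.
Proof.
  symmetry. apply uniq_inv. rewrite <- (scal_one a) at 1. rewrite <- scal_addl.
  replace (Cadd C1 m1) with C0 by (unfold m1; cunf; f_equal; ring). apply scal_C0.
Qed.

Lemma opp_opp a : opp (opp a) = a.
Proof. symmetry. apply uniq_inv. apply add_opp_l. Qed.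

Lemma opp_zero : opp (zero : Q) = zero.
Proof. symmetry. apply uniq_inv. apply add_zero. Qed.

Lemma add_swap4 a b c d : add (add a b) (add c d) = add (add a c) (add b d).
Proof.
  rewrite !add_assoc. f_equal. rewrite <- !add_assoc. f_equal. apply add_comm.
Qed.

Lemma opp_add a b : opp (add a b) = add (opp a) (opp b).
Proof.
  symmetry. apply uniq_inv. rewrite add_swap4, !add_opp. apply add_zero.
Qed.

Lemma scal_zero_r l : scal l (zero : Q) = zero.
Proof.
  apply (add_cancel_l (scal l zero)). rewrite add_zero, <- scal_addr, add_zero. reflexivity.
Qed.

Lemma sub_self a : sb a a = zero.
Proof. apply add_opp. Qed.

Lemma sub_zero a : sb a zero = a.
Proof. unfold sub. rewrite opp_zero. apply add_zero. Qed.

Lemma sub_add_sub a b c : add (sb a b) (sb b c) = sb a c.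
Proof.
  unfold sub. rewrite <- add_assoc. f_equal. rewrite add_assoc, add_opp_l. apply add_zero_l.
Qed.

Lemma opp_sub a b : opp (sb a b) = sb b a.
Proof. unfold sub. rewrite opp_add, opp_opp. apply add_comm. Qed.

Lemma sub_add_add a b c d : sb (add a b) (add c d) = add (sb a c) (sb b d).
Proof. unfold sub. rewrite opp_add. apply add_swap4. Qed.

Lemma add_sub_cancel a b : add b (sb a b) = a.
Proof. unfold sub. rewrite add_comm, <- add_assoc, add_opp_l. apply add_zero. Qed.

Lemma scal_opp l a : scal l (opp a) = opp (scal l a).
Proof.
  rewrite !opp_scal, <- !scal_mul. f_equal. unfold m1; cdes; cunf; f_equal; ring.
Qed.

Lemma scal_sub l a b : scal l (sb a b) = sb (scal l a) (scal l b).
Proof. unfold sub. rewrite scal_addr, scal_opp. reflexivity. Qed.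

Lemma scal_subl l m a : scal (Cminus l m) a = sb (scal l a) (scal m a).
Proof.
  unfold Cminus, sub. rewrite scal_addl, scal_mul, <- opp_scal. reflexivity.
Qed.

Lemma norm_zero : norm (zero : Q) = 0.
Proof. rewrite <- (scal_C0 zero), norm_scal, Cabs_zero. ring. Qed.

Lemma norm_opp a : norm (opp a) = norm a.
Proof.
  rewrite opp_scal, norm_scal. unfold m1. rewrite Cabs_real. unfold Rabs; destruct Rcase_abs; lra.
Qed.

Lemma norm_sub_sym a b : norm (sb a b) = norm (sb b a).
Proof. rewrite <- opp_sub, norm_opp. reflexivity. Qed.

Lemma norm_sub_tri a b c : norm (sb a c) <= norm (sb a b) + norm (sb b c).
Proof. rewrite <- (sub_add_sub a b c). apply norm_triangle. Qed.

Lemma norm_sub_ge a b : norm a <= norm b + norm (sb a b).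
Proof. rewrite <- (add_sub_cancel a b) at 1. apply norm_triangle. Qed.

Lemma norm_sub_0 a : norm (sb a zero) = norm a.
Proof. rewrite sub_zero. reflexivity. Qed.

Lemma A0_opp x : A0 x -> A0 (opp x).
Proof. intros. rewrite opp_scal. apply A0_scal; auto. Qed.

Lemma A0_sub x y : A0 x -> A0 y -> A0 (sb x y).
Proof. intros. apply A0_add; auto. apply A0_opp; auto. Qed.

Lemma mul_zero_l x : A0 x -> mul zero x = zero.
Proof. intros. rewrite <- (scal_C0 zero) at 1. rewrite mul_scal_r, scal_C0; auto. Qed.

Lemma mul_zero_r x : A0 x -> mul x zero = zero.
Proof. intros. rewrite <- (scal_C0 zero) at 1. rewrite mul_scal_l, scal_C0; auto. Qed.

Lemma mul_opp_l a x : A0 x -> mul (opp a) x = opp (mul a x).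
Proof. intros. rewrite !opp_scal, mul_scal_r; auto. Qed.

Lemma mul_sub_l a b x : A0 x -> mul (sb a b) x = sb (mul a x) (mul b x).
Proof. intros. unfold sub. rewrite mul_addl_r, mul_opp_l; auto. Qed.

Lemma mul_opp_r a x : A0 x -> mul a (opp x) = opp (mul a x).
Proof. intros. rewrite !opp_scal, mul_scalr_r; auto. Qed.

Lemma mul_sub_r a x y : A0 x -> A0 y -> mul a (sb x y) = sb (mul a x) (mul a y).
Proof. intros. unfold sub. rewrite mul_addr_r, mul_opp_r; auto. apply A0_opp; auto. Qed.

Lemma mul_sub_lA x a b : A0 x -> mul x (sb a b) = sb (mul x a) (mul x b).
Proof. intros. unfold sub. rewrite mul_addr_l, !opp_scal, mul_scal_l; auto. Qed.

Lemma mul_sub_rA x y a : A0 x -> A0 y -> mul (sb x y) a = sb (mul x a) (mul y a).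
Proof.
  intros. unfold sub. rewrite mul_addl_l, !opp_scal, mul_scall_l; auto. apply A0_opp; auto.
Qed.

Lemma star_zero : star (zero : Q) = zero.
Proof. rewrite <- (scal_C0 zero) at 1. rewrite star_scal.
  replace (Cconj C0) with C0 by (cunf; f_equal; ring). apply scal_C0. Qed.

Lemma star_opp a : star (opp a) = opp (star a).
Proof.
  rewrite !opp_scal, star_scal. f_equal. unfold m1; cunf; f_equal; ring.
Qed.

Lemma star_sub a b : star (sb a b) = sb (star a) (star b).
Proof. unfold sub. rewrite star_add, star_opp. reflexivity. Qed.

Lemma norm_star_sub a b : norm (sb (star a) (star b)) = norm (sb a b).
Proof. rewrite <- star_sub, norm_star. reflexivity. Qed.

Lemma star_mul_l y b : A0 y -> star (mul y b) = mul (star b) (star y).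
Proof.
  intros Hy.
  assert (E: mul y b = star (mul (star b) (star y))).
  { rewrite star_mul by (apply A0_star; auto). rewrite !star_star. reflexivity. }
  rewrite E, star_star. reflexivity.
Qed.

Lemma unit_star e : is_unit Q e -> star e = e.
Proof.
  intros [He H]. destruct (H (star e)) as [H1 _].
  rewrite <- (star_star e) at 2. rewrite <- H1 at 2. rewrite star_mul by auto.
  rewrite star_star. destruct (H (star e)) as [_ H2]. rewrite <- H1 at 1.
  reflexivity.
Qed.

Lemma mul_l_cont y : A0 y -> forall a eps, 0 < eps ->
  exists delta, 0 < delta /\ forall b, norm (sb b a) < delta ->
    norm (sb (mul y b) (mul y a)) < eps.
Proof.
  intros Hy a eps Heps.
  destruct (mul_r_cont (star y) (A0_star _ Hy) (star a) eps Heps) as [d [Hd H]].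
  exists d. split; auto. intros b Hb.
  rewrite <- norm_star_sub, !star_mul_l by auto.
  apply H. fold (sb (star b) (star a)). rewrite norm_star_sub. auto.
Qed.

Lemma mul_r_cont' x : A0 x -> forall a eps, 0 < eps ->
  exists delta, 0 < delta /\ forall b, norm (sb b a) < delta ->
    norm (sb (mul b x) (mul a x)) < eps.
Proof. intros. apply mul_r_cont; auto. Qed.

End Alg.

Section Func.
Variable Q : BanachQSA.
Implicit Types a b c d x y : Q.
Notation sb := (sub Q).
Variable w : Q -> C.
Hypothesis Hlin : linear_functional Q w.

Lemma lin_add a b : w (add a b) = Cadd (w a) (w b).
Proof. apply (proj1 Hlin). Qed.
Lemma lin_scal l a : w (scal l a) = Cmul l (w a).
Proof. apply (proj2 Hlin). Qed.
Lemma lin_zero : w zero = C0.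
Proof.
  rewrite <- (scal_C0 Q zero), lin_scal. cdes; cunf; f_equal; ring.
Qed.
Lemma lin_opp a : w (opp a) = Cmul (-1,0) (w a).
Proof. rewrite opp_scal, lin_scal. reflexivity. Qed.
Lemma lin_sub a b : w (sb a b) = Cminus (w a) (w b).
Proof. unfold sub, Cminus. rewrite lin_add, lin_opp. reflexivity. Qed.

Definition Bd a M := forall x, A0 x ->
  Cabs (w (mul (star a) x)) <= M * sqrt (Re (w (mul (star x) x))).

Lemma Bd_mono a M N : M <= N -> Bd a M -> Bd a N.
Proof.
  intros HMN H x Hx. specialize (H x Hx).
  pose proof (sqrt_pos (Re (w (mul (star x) x)))). nra.
Qed.

Lemma Bd_add a b M N : Bd a M -> Bd b N -> Bd (add a b) (M + N).
Proof.
  intros Ha Hb x Hx. rewrite star_add, mul_addl_r, lin_add by auto.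
  eapply Rle_trans; [apply Cabs_triangle|].
  specialize (Ha x Hx); specialize (Hb x Hx). lra.
Qed.

Lemma Bd_scal a M l : Bd a M -> Bd (scal l a) (Cabs l * M).
Proof.
  intros Ha x Hx. rewrite star_scal, mul_scal_r, lin_scal, Cabs_mul, Cabs_conj by auto.
  specialize (Ha x Hx). pose proof (Cabs_nonneg l).
  rewrite Rmult_assoc. apply Rmult_le_compat_l; auto.
Qed.

Lemma Bd_zero : Bd zero 0.
Proof.
  intros x Hx. rewrite star_zero, mul_zero_l, lin_zero, Cabs_zero by auto. lra.
Qed.

Hypothesis Hcont : norm_continuous Q w.

Lemma w_cont a eps : 0 < eps -> exists delta, 0 < delta /\
    forall b, norm (sb b a) < delta -> Cabs (Cminus (w b) (w a)) < eps.
Proof. intros. apply Hcont; auto. Qed.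

Lemma Bd_lsc b M : ~ Bd b M -> exists delta, 0 < delta /\
  forall b', norm (sb b' b) < delta -> ~ Bd b' M.
Proof.
  intros H. apply not_all_ex_not in H. destruct H as [x Hx].
  apply imply_to_and in Hx. destruct Hx as [Hx Hgt]. apply Rnot_le_lt in Hgt.
  set (s := M * sqrt (Re (w (mul (star x) x)))) in *.
  set (eps := Cabs (w (mul (star b) x)) - s).
  assert (Heps : 0 < eps) by (unfold eps; lra).
  destruct (w_cont (mul (star b) x) eps Heps) as [d1 [Hd1 H1]].
  destruct (mul_r_cont x Hx (star b) d1 Hd1) as [d2 [Hd2 H2]].
  exists d2. split; auto. intros b' Hb' HB.
  specialize (HB x Hx). fold s in HB.
  assert (Hn : norm (sb (mul (star b') x) (mul (star b) x)) < d1).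
  { apply H2. fold (sb (star b') (star b)). rewrite norm_star_sub. auto. }
  specialize (H1 _ Hn).
  pose proof (Cabs_minus_tri (w (mul (star b') x)) (w (mul (star b) x))).
  unfold eps in *. lra.
Qed.

Hypothesis HL3 : forall a, exists g, 0 < g /\ Bd a g.

Lemma sub_add_l c h : sb (add c h) c = h.
Proof.
  unfold sub. rewrite (add_comm c h), <- add_assoc, add_opp. apply add_zero.
Qed.

Lemma baire_claim : exists (n : nat) c r, 0 < r /\
  forall b, norm (sb b c) < r -> Bd b (INR n).
Proof.
  apply NNPP. intros Hno.
  assert (H : forall n c r, 0 < r -> exists b, norm (sb b c) < r /\ ~ Bd b (INR n)).
  { intros n c r Hr. apply NNPP. intros Hb. apply Hno. exists n, c, r. split; auto.
    intros b Hbr. apply NNPP. intros HnB. apply Hb. exists b. auto. }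
  clear Hno.
  set (P := fun (k : nat) (p : Q * R) => 0 < snd p /\
        forall b, norm (sb b (fst p)) < snd p -> ~ Bd b (INR k)).
  set (Rel := fun (k : nat) (p p' : Q * R) => snd p' <= snd p / 4 /\
        snd p' <= / (INR k + 1) /\ norm (sb (fst p') (fst p)) < snd p / 2).
  assert (step : forall k p, exists p', P k p -> P (S k) p' /\ Rel k p p').
  { intros k p. destruct (classic (P k p)) as [Hp|Hp]; [|exists p; tauto].
    destruct Hp as [Hr _].
    destruct (H (S k) (fst p) (snd p / 2)) as [b [Hb HnB]]; [lra|].
    destruct (Bd_lsc _ _ HnB) as [d [Hd Hdd]].
    exists (b, Rmin d (Rmin (snd p / 4) (/ (INR k + 1)))). intros _.
    pose proof (RinvN_pos k).
    assert (0 < Rmin d (Rmin (snd p / 4) (/ (INR k + 1)))).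
    { apply Rmin_pos; auto. apply Rmin_pos; lra. }
    unfold P, Rel; split; [split|]; simpl; auto.
    - intros b' Hb'. apply Hdd. pose proof (Rmin_l d (Rmin (snd p / 4) (/ (INR k + 1)))). lra.
    - pose proof (Rmin_r d (Rmin (snd p / 4) (/ (INR k + 1)))).
      pose proof (Rmin_l (snd p / 4) (/ (INR k + 1))).
      pose proof (Rmin_r (snd p / 4) (/ (INR k + 1))).
      repeat split; lra. }
  set (f := fun k p => proj1_sig (constructive_indefinite_description _ (step k p))).
  assert (Hf : forall k p, P k p -> P (S k) (f k p) /\ Rel k p (f k p)).
  { intros k p. unfold f. destruct (constructive_indefinite_description _ (step k p)). auto. }
  destruct (H 0%nat zero 1) as [b0 [_ Hb0]]; [lra|].
  destruct (Bd_lsc _ _ Hb0) as [d0 [Hd0 Hdd0]].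
  set (s := iter_seq (b0, d0) f).
  assert (HP : forall k, P k (s k)).
  { induction k.
    - split; simpl; auto.
    - simpl. apply Hf. auto. }
  assert (HR : forall k, Rel k (s k) (s (S k))).
  { intros k. simpl. apply Hf. auto. }
  set (bb := fun k => fst (s k)). set (rr := fun k => snd (s k)).
  assert (Hr : forall k, 0 < rr k) by (intros k; apply (HP k)).
  assert (D : forall j n, norm (sb (bb (n + j)%nat) (bb n)) <= 2/3 * rr n).
  { induction j; intros n.
    - rewrite Nat.add_0_r, sub_self, norm_zero. specialize (Hr n). lra.
    - rewrite <- plus_n_Sm.
      pose proof (norm_sub_tri Q (bb (S n + j)%nat) (bb (S n)) (bb n)).
      specialize (IHj (S n)). simpl in IHj. simpl in H0.
      destruct (HR n) as [R1 [R2 R3]].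
      unfold bb, rr in *. lra. }
  assert (Hcauchy : forall eps, 0 < eps -> exists N, forall n m, (N <= n)%nat -> (N <= m)%nat ->
        norm (add (bb n) (opp (bb m))) < eps).
  { intros eps Heps. destruct (arch_inv (3/4 * eps)) as [K HK]; [lra|].
    exists (S K). intros n m Hn Hm.
    destruct (HR K) as [_ [R2 _]].
    pose proof (D (n - S K)%nat (S K)) as Dn. pose proof (D (m - S K)%nat (S K)) as Dm.
    replace (S K + (n - S K))%nat with n in Dn by lia.
    replace (S K + (m - S K))%nat with m in Dm by lia.
    pose proof (norm_sub_tri Q (bb n) (bb (S K)) (bb m)).
    rewrite (norm_sub_sym Q (bb (S K)) (bb m)) in H0.
    fold (sb (bb n) (bb m)). unfold rr in *. simpl in R2. unfold bb in *. lra. }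
  destruct (complete (fun k => bb k) Hcauchy) as [l Hl].
  assert (Hln : forall n, norm (sb l (bb n)) <= 2/3 * rr n).
  { intros n. apply Rle_plus_epsilon. intros eps Heps.
    destruct (Hl eps Heps) as [N HN].
    specialize (HN (N + n)%nat ltac:(lia)). specialize (D N n).
    replace (n + N)%nat with (N + n)%nat in D by lia.
    pose proof (norm_sub_tri Q l (bb (N + n)%nat) (bb n)).
    rewrite (norm_sub_sym Q l (bb (N + n)%nat)) in H0. cbv beta in HN.
    fold (sb (bb (N+n)%nat) l) in HN. lra. }
  destruct (HL3 l) as [g [Hg Hgl]].
  destruct (arch_nat g) as [n Hn].
  apply (proj2 (HP n) l).
  - specialize (Hln n). specialize (Hr n). unfold rr, bb in *. lra.
  - apply (Bd_mono l g); auto. lra.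
Qed.


Lemma baire_bound : exists K, 0 <= K /\ forall a, Bd a (K * norm a).
Proof.
  destruct baire_claim as [n [c [r [Hr Hb]]]].
  set (N := INR n). assert (HN : 0 <= N) by apply pos_INR.
  assert (Hh : forall h, norm h < r -> Bd h (N + N)).
  { intros h Hh.
    assert (H1 : Bd (add c h) N) by (apply Hb; rewrite sub_add_l; auto).
    assert (H2 : Bd (opp c) N).
    { rewrite opp_scal. apply (Bd_mono _ (Cabs m1 * N)).
      - unfold m1. rewrite Cabs_real. right. unfold Rabs; destruct Rcase_abs; lra.
      - apply Bd_scal. apply Hb. rewrite sub_self, norm_zero. auto. }
    replace h with (add (add c h) (opp c)) by apply sub_add_l.
    apply Bd_add; auto. }
  exists (4 * N / r). split.
  { apply Rmult_le_pos; [lra|]. left; apply Rinv_0_lt_compat; auto. }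
  intros a. destruct (Req_dec (norm a) 0) as [Ha|Ha].
  - rewrite Ha, (norm_eq0 a Ha). apply (Bd_mono _ 0); [right; ring|]. apply Bd_zero.
  - pose proof (norm_nonneg a) as Hna.
    set (t := r / (2 * norm a)).
    assert (Ht : 0 < t) by (unfold t; apply Rdiv_lt_0_compat; lra).
    assert (Hsh : Bd (scal (t, 0) a) (N + N)).
    { apply Hh. rewrite norm_scal, Cabs_real, Rabs_right by lra. unfold t. field_simplify; lra. }
    assert (Ea : scal (/ t, 0) (scal (t, 0) a) = a).
    { rewrite <- scal_mul. replace (Cmul (/ t, 0) (t, 0)) with C1.
         apply scal_one. cunf. f_equal; [rewrite Rinv_l by lra; ring | ring]. }
    rewrite <- Ea at 1.
    apply (Bd_mono _ (Cabs (/ t, 0) * (N + N))); [|apply Bd_scal; auto].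
    rewrite Cabs_real, Rabs_right by (left; apply Rinv_0_lt_compat; auto).
    right. unfold t. field. lra.
Qed.

Hypothesis HL1 : forall x, A0 x -> Cnonneg (w (mul (star x) x)).

Lemma sqrt_bound x M : A0 x -> 0 <= M -> Bd x M -> sqrt (Re (w (mul (star x) x))) <= M.
Proof.
  intros Hx HM HB. specialize (HB x Hx). destruct (HL1 x Hx) as [_ Hre].
  set (t := Re (w (mul (star x) x))) in *.
  pose proof (Cabs_Re (w (mul (star x) x))). fold t in H. rewrite Rabs_right in H by lra.
  pose proof (sqrt_sqrt t Hre). pose proof (sqrt_pos t).
  destruct (Req_dec (sqrt t) 0) as [E|E]; [lra|].
  assert (sqrt t * sqrt t <= M * sqrt t) by lra.
  apply (Rmult_le_reg_r (sqrt t)); lra.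
Qed.

Lemma F_bound K : 0 <= K -> (forall a, Bd a (K * norm a)) ->
  forall a x, A0 x -> Cabs (w (mul (star a) x)) <= K * norm a * (K * norm x).
Proof.
  intros HK HB a x Hx. eapply Rle_trans; [apply (HB a x Hx)|].
  apply Rmult_le_compat_l. { apply Rmult_le_pos; auto. apply norm_nonneg. }
  apply sqrt_bound; auto. apply Rmult_le_pos; auto. apply norm_nonneg.
Qed.

End Func.

Definition cconv (u : nat -> C) (l : C) : Prop :=
  forall eps, 0 < eps -> exists N, forall n, (N <= n)%nat -> Cabs (Cminus (u n) l) < eps.

Definition Clim (u : nat -> C) : C := epsilon (inhabits C0) (fun l => cconv u l).

Lemma Clim_spec u : (exists l, cconv u l) -> cconv u (Clim u).
Proof. intros H. unfold Clim. apply epsilon_spec. auto. Qed.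

Lemma Cminus_tri z1 z2 z3 : Cabs (Cminus z1 z3) <= Cabs (Cminus z1 z2) + Cabs (Cminus z2 z3).
Proof.
  replace (Cminus z1 z3) with (Cadd (Cminus z1 z2) (Cminus z2 z3))
    by (unfold Cminus; cdes; cunf; f_equal; ring).
  apply Cabs_triangle.
Qed.

Lemma cconv_unique u l l' : cconv u l -> cconv u l' -> l = l'.
Proof.
  intros H1 H2.
  assert (E : Cminus l l' = C0).
  { apply Cabs_small_0. intros eps Heps.
    destruct (H1 (eps/2)) as [N1 HN1]; [lra|]. destruct (H2 (eps/2)) as [N2 HN2]; [lra|].
    specialize (HN1 (N1 + N2)%nat ltac:(lia)). specialize (HN2 (N1 + N2)%nat ltac:(lia)).
    pose proof (Cminus_tri l (u (N1 + N2)%nat) l').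
    rewrite (Cabs_minus_sym l (u (N1 + N2)%nat)) in H. lra. }
  destruct l, l'. unfold Cminus in E. cunf. injection E; intros. f_equal; lra.
Qed.

Lemma cconv_add u v l l' : cconv u l -> cconv v l' ->
  cconv (fun n => Cadd (u n) (v n)) (Cadd l l').
Proof.
  intros H1 H2 eps Heps.
  destruct (H1 (eps/2)) as [N1 HN1]; [lra|]. destruct (H2 (eps/2)) as [N2 HN2]; [lra|].
  exists (N1 + N2)%nat. intros n Hn.
  specialize (HN1 n ltac:(lia)). specialize (HN2 n ltac:(lia)).
  replace (Cminus (Cadd (u n) (v n)) (Cadd l l')) with (Cadd (Cminus (u n) l) (Cminus (v n) l'))
    by (unfold Cminus; cdes; cunf; f_equal; ring).
  pose proof (Cabs_triangle (Cminus (u n) l) (Cminus (v n) l')). lra.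
Qed.

Lemma cconv_mul u l c : cconv u l -> cconv (fun n => Cmul c (u n)) (Cmul c l).
Proof.
  intros H eps Heps.
  destruct (H (eps / (Cabs c + 1))) as [N HN].
  { pose proof (Cabs_nonneg c). apply Rdiv_lt_0_compat; lra. }
  exists N. intros n Hn. specialize (HN n Hn).
  replace (Cminus (Cmul c (u n)) (Cmul c l)) with (Cmul c (Cminus (u n) l))
    by (unfold Cminus; cdes; cunf; f_equal; ring).
  rewrite Cabs_mul. pose proof (Cabs_nonneg c). pose proof (Cabs_nonneg (Cminus (u n) l)).
  apply Rle_lt_trans with ((Cabs c + 1) * Cabs (Cminus (u n) l)); [nra|].
  replace eps with ((Cabs c + 1) * (eps / (Cabs c + 1))) by (field; lra).
  apply Rmult_lt_compat_l; lra.
Qed.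

Lemma cconv_ext u v l : (forall n, u n = v n) -> cconv u l -> cconv v l.
Proof. intros E H eps Heps. destruct (H eps Heps) as [N HN]. exists N. intros. rewrite <- E. auto. Qed.

Lemma cconv_nonneg u l : (forall n, Cnonneg (u n)) -> cconv u l -> Cnonneg l.
Proof.
  intros Hu H. destruct l as [lr li]. split; simpl.
  - apply Rabs0. apply Rle_antisym; [|apply Rabs_pos].
    apply Rle_plus_epsilon. intros eps Heps. destruct (H eps Heps) as [N HN].
    specialize (HN N (le_n _)). specialize (Hu N).
    pose proof (Cabs_Im (Cminus (u N) (lr, li))) as HI.
    assert (E : Im (Cminus (u N) (lr, li)) = Im (u N) - li)
      by (unfold Cminus; destruct (u N); cunf; ring).
    rewrite E in HI. destruct Hu as [Hb _]. rewrite Hb in HI.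
    replace (0 - li) with (- li) in HI by ring. rewrite Rabs_Ropp in HI. lra.
  - apply Rle_plus_epsilon. intros eps Heps. destruct (H eps Heps) as [N HN].
    specialize (HN N (le_n _)). specialize (Hu N).
    pose proof (Cabs_Re (Cminus (u N) (lr, li))) as HI.
    assert (E : Re (Cminus (u N) (lr, li)) = Re (u N) - lr)
      by (unfold Cminus; destruct (u N); cunf; ring).
    rewrite E in HI. destruct Hu as [_ Ha].
    pose proof (Rle_abs (Re (u N) - lr)). lra.
Qed.

Lemma Re_Cminus z w : Re (Cminus z w) = Re z - Re w.
Proof. unfold Cminus; cdes; cunf; ring. Qed.
Lemma Im_Cminus z w : Im (Cminus z w) = Im z - Im w.
Proof. unfold Cminus; cdes; cunf; ring. Qed.

Lemma Ccomplete u : (forall eps, 0 < eps -> exists N, forall n m, (N <= n)%nat -> (N <= m)%nat ->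
   Cabs (Cminus (u n) (u m)) < eps) -> exists l, cconv u l.
Proof.
  intros H.
  assert (Hre : Cauchy_crit (fun n => Re (u n))).
  { intros eps Heps. destruct (H eps Heps) as [N HN]. exists N. intros n m Hn Hm.
    specialize (HN n m Hn Hm). pose proof (Cabs_Re (Cminus (u n) (u m))).
    unfold Rdist. rewrite Re_Cminus in H0. lra. }
  assert (Him : Cauchy_crit (fun n => Im (u n))).
  { intros eps Heps. destruct (H eps Heps) as [N HN]. exists N. intros n m Hn Hm.
    specialize (HN n m Hn Hm). pose proof (Cabs_Im (Cminus (u n) (u m))).
    unfold Rdist. rewrite Im_Cminus in H0. lra. }
  destruct (R_complete _ Hre) as [lr Hlr]. destruct (R_complete _ Him) as [li Hli].
  exists (lr, li). intros eps Heps.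
  destruct (Hlr (eps/2)) as [N1 HN1]; [lra|]. destruct (Hli (eps/2)) as [N2 HN2]; [lra|].
  exists (N1 + N2)%nat. intros n Hn.
  specialize (HN1 n ltac:(lia)). specialize (HN2 n ltac:(lia)). unfold Rdist in *.
  pose proof (Cabs_le_sum (Cminus (u n) (lr, li))).
  rewrite Re_Cminus, Im_Cminus in H0. simpl in H0. lra.
Qed.

Section Conv.
Variable Q : BanachQSA.
Implicit Types a b c d x y : Q.
Notation sb := (sub Q).

Definition conv (u : nat -> Q) (a : Q) : Prop :=
  forall eps, 0 < eps -> exists N, forall n, (N <= n)%nat -> norm (sb (u n) a) < eps.

Definition approx (a : Q) (n : nat) : Q :=
  proj1_sig (constructive_indefinite_description _ (A0_dense a (/ (INR n + 1)) (RinvN_pos n))).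

Lemma approx_A0 a n : A0 (approx a n).
Proof. unfold approx. destruct (constructive_indefinite_description _ _) as [x Hx]. simpl. apply Hx. Qed.

Lemma approx_close a n : norm (sb a (approx a n)) < / (INR n + 1).
Proof. unfold approx. destruct (constructive_indefinite_description _ _) as [x Hx]. simpl. apply Hx. Qed.

Lemma conv_approx a : conv (approx a) a.
Proof.
  intros eps Heps. destruct (arch_inv eps Heps) as [K HK]. exists K. intros n Hn.
  rewrite norm_sub_sym. eapply Rlt_le_trans; [apply approx_close|].
  apply Rlt_le in HK. eapply Rle_trans; [|apply HK].
  apply Rinv_le_contravar. { pose proof (pos_INR K). lra. }
  apply le_INR in Hn. lra.
Qed.

Lemma conv_const a : conv (fun _ => a) a.
Proof. intros eps Heps. exists O. intros. rewrite sub_self, norm_zero. auto. Qed.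

Lemma conv_add u v a b : conv u a -> conv v b -> conv (fun n => add (u n) (v n)) (add a b).
Proof.
  intros H1 H2 eps Heps.
  destruct (H1 (eps/2)) as [N1 HN1]; [lra|]. destruct (H2 (eps/2)) as [N2 HN2]; [lra|].
  exists (N1 + N2)%nat. intros n Hn.
  specialize (HN1 n ltac:(lia)). specialize (HN2 n ltac:(lia)).
  rewrite sub_add_add. pose proof (norm_triangle (sb (u n) a) (sb (v n) b)). lra.
Qed.

Lemma conv_scal u a l : conv u a -> conv (fun n => scal l (u n)) (scal l a).
Proof.
  intros H eps Heps.
  destruct (H (eps / (Cabs l + 1))) as [N HN].
  { pose proof (Cabs_nonneg l). apply Rdiv_lt_0_compat; lra. }
  exists N. intros n Hn. specialize (HN n Hn).
  rewrite <- scal_sub, norm_scal. pose proof (Cabs_nonneg l). pose proof (norm_nonneg (sb (u n) a)).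
  apply Rle_lt_trans with ((Cabs l + 1) * norm (sb (u n) a)); [nra|].
  replace eps with ((Cabs l + 1) * (eps / (Cabs l + 1))) by (field; lra).
  apply Rmult_lt_compat_l; lra.
Qed.

Lemma conv_star u a : conv u a -> conv (fun n => star (u n)) (star a).
Proof. intros H eps Heps. destruct (H eps Heps) as [N HN]. exists N. intros. rewrite norm_star_sub. auto. Qed.

Lemma conv_mul_r u a x : A0 x -> conv u a -> conv (fun n => mul (u n) x) (mul a x).
Proof.
  intros Hx H eps Heps. destruct (mul_r_cont x Hx a eps Heps) as [d [Hd Hdd]].
  destruct (H d Hd) as [N HN]. exists N. intros n Hn. apply Hdd. apply HN. auto.
Qed.

Lemma conv_mul_l u a y : A0 y -> conv u a -> conv (fun n => mul y (u n)) (mul y a).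
Proof.
  intros Hy H eps Heps. destruct (mul_l_cont Q y Hy a eps Heps) as [d [Hd Hdd]].
  destruct (H d Hd) as [N HN]. exists N. intros n Hn. apply Hdd. apply HN. auto.
Qed.

Lemma conv_bounded u a : conv u a -> exists N, forall n, (N <= n)%nat -> norm (u n) <= norm a + 1.
Proof.
  intros H. destruct (H 1) as [N HN]; [lra|]. exists N. intros n Hn.
  specialize (HN n Hn). pose proof (norm_sub_ge Q (u n) a). lra.
Qed.

Lemma conv_cconv (w : Q -> C) u a : norm_continuous Q w -> conv u a ->
  cconv (fun n => w (u n)) (w a).
Proof.
  intros Hc H eps Heps. destruct (Hc a eps Heps) as [d [Hd Hdd]].
  destruct (H d Hd) as [N HN]. exists N. intros n Hn. apply Hdd. apply HN. auto.
Qed.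

End Conv.

Lemma polar_C (bxx bxy byx byy : C) :
  Cadd (Cadd bxx bxy) (Cadd byx byy) = C0 ->
  Cadd (Cadd bxx (Cmul (Cconj (0,1)) bxy)) (Cadd (Cmul (0,1) byx) (Cmul (0,1) (Cmul (Cconj (0,1)) byy))) = C0 ->
  bxx = C0 -> byy = C0 -> bxy = C0.
Proof.
  intros H1 H2 H3 H4. subst. cdes. cunf.
  injection H1; injection H2; intros. f_equal; lra.
Qed.

Section Forms.
Variable Q : BanachQSA.
Implicit Types a b c d x y : Q.
Notation sb := (sub Q).
Variable Om : Q -> Q -> C.
Hypothesis Om_addl : forall a b c, Om (add a b) c = Cadd (Om a c) (Om b c).
Hypothesis Om_scall : forall l a c, Om (scal l a) c = Cmul l (Om a c).
Hypothesis Om_addr : forall a b c, Om a (add b c) = Cadd (Om a b) (Om a c).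
Hypothesis Om_scalr : forall l a c, Om a (scal l c) = Cmul (Cconj l) (Om a c).

Lemma Om_zero_l b : Om zero b = C0.
Proof. rewrite <- (scal_C0 Q zero), Om_scall. cdes; cunf; f_equal; ring. Qed.
Lemma Om_zero_r b : Om b zero = C0.
Proof. rewrite <- (scal_C0 Q zero), Om_scalr. cdes; cunf; f_equal; ring. Qed.
Lemma Om_subl a b c : Om (sb a b) c = Cminus (Om a c) (Om b c).
Proof. unfold sub, Cminus. rewrite Om_addl, opp_scal, Om_scall. reflexivity. Qed.
Lemma Om_subr a b c : Om c (sb a b) = Cminus (Om c a) (Om c b).
Proof.
  unfold sub, Cminus. rewrite Om_addr, opp_scal, Om_scalr. f_equal. f_equal.
  unfold m1; cunf; f_equal; ring.
Qed.

Lemma Om_expand a b l : Om (add a (scal l b)) (add a (scal l b)) =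
  Cadd (Cadd (Om a a) (Cmul (Cconj l) (Om a b)))
       (Cadd (Cmul l (Om b a)) (Cmul l (Cmul (Cconj l) (Om b b)))).
Proof.
  rewrite Om_addl, !Om_addr, !Om_scall, !Om_scalr. reflexivity.
Qed.

Hypothesis Om_pos : forall a, Cnonneg (Om a a).

Lemma Om_herm a b : Om b a = Cconj (Om a b).
Proof.
  pose proof (Om_pos (add a (scal C1 b))) as P1.
  pose proof (Om_pos (add a (scal (0,1) b))) as P2.
  rewrite Om_expand in P1, P2.
  pose proof (Om_pos a) as Pa. pose proof (Om_pos b) as Pb.
  destruct (Om a a) as [aa1 aa2]. destruct (Om b b) as [bb1 bb2].
  destruct (Om a b) as [z1 z2]. destruct (Om b a) as [u1 u2].
  cunf. destruct P1 as [P1 _]; destruct P2 as [P2 _]. destruct Pa as [Pa _]; destruct Pb as [Pb _].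
  f_equal; nra.
Qed.

Lemma Om_quad a b t :
  0 <= Re (Om a a) - 2 * t * (Re (Om a b) * Re (Om a b) + Im (Om a b) * Im (Om a b))
       + t * t * (Re (Om a b) * Re (Om a b) + Im (Om a b) * Im (Om a b)) * Re (Om b b).
Proof.
  pose proof (Om_pos (add a (scal (Cmul (-t, 0) (Om a b)) b))) as P.
  rewrite Om_expand, (Om_herm a b) in P.
  pose proof (Om_pos a) as Pa. pose proof (Om_pos b) as Pb.
  destruct (Om a a) as [aa1 aa2]. destruct (Om b b) as [bb1 bb2].
  destruct (Om a b) as [z1 z2].
  cunf. destruct P as [_ P]. destruct Pa as [Pa _]; destruct Pb as [Pb _]. subst.
  nra.
Qed.

Lemma Om_CS a b : Cabs (Om a b) <= sqrt (Re (Om a a)) * sqrt (Re (Om b b)).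
Proof.
  pose proof (Om_quad a b) as Hq.
  destruct (Om_pos a) as [_ HA]. destruct (Om_pos b) as [_ HB].
  set (A := Re (Om a a)) in *. set (B := Re (Om b b)) in *.
  set (s := Re (Om a b) * Re (Om a b) + Im (Om a b) * Im (Om a b)) in *.
  assert (Hs : 0 <= s) by (unfold s; nra).
  assert (Hle : s <= A * B).
  { destruct (Rle_lt_or_eq_dec 0 B HB) as [Bp|B0].
    - specialize (Hq (/ B)).
      assert (E : / B * / B * s * B = s * / B) by (field; lra).
      rewrite E in Hq.
      assert (0 <= A - s * / B) by lra.
      apply (Rmult_le_compat_r B) in H; [|lra].
      replace ((A - s * / B) * B) with (A * B - s) in H by (field; lra). lra.
    - rewrite <- B0. rewrite <- B0 in Hq.
      destruct (Rle_lt_or_eq_dec 0 s Hs) as [sp|s0]; [|lra].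
      specialize (Hq ((A + 1) / (2 * s))).
      replace (2 * ((A + 1) / (2 * s)) * s) with (A + 1) in Hq by (field; lra).
      lra. }
  unfold Cabs. rewrite <- sqrt_mult by auto. apply sqrt_le_1_alt. fold s. auto.
Qed.

Lemma Om_zero_diag a b : Re (Om a a) = 0 -> Om a b = C0.
Proof.
  intros H. apply Cabs_0_eq. pose proof (Om_CS a b). rewrite H, sqrt_0 in H0.
  pose proof (Cabs_nonneg (Om a b)). lra.
Qed.

End Forms.

Section Ext.
Variable Q : BanachQSA.
Implicit Types a b c d x y : Q.
Notation sb := (sub Q).
Variable w : Q -> C.
Hypothesis Hlin : linear_functional Q w.
Hypothesis Hcont : norm_continuous Q w.
Hypothesis HL1 : forall x, A0 x -> Cnonneg (w (mul (star x) x)).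
Variable M : R.
Hypothesis HM : 0 < M.
Hypothesis HF : forall a x, A0 x -> Cabs (w (mul (star a) x)) <= M * norm a * norm x.

Definition F x y := w (mul (star y) x).

Lemma F_diff x x' y y' : A0 x -> A0 x' -> A0 y -> A0 y' ->
  Cabs (Cminus (F x y) (F x' y')) <= M * norm (sb x x') * norm y + M * norm (sb y y') * norm x'.
Proof.
  intros Hx Hx' Hy Hy'.
  replace (Cminus (F x y) (F x' y')) with (Cadd (Cminus (F x y) (F x' y)) (Cminus (F x' y) (F x' y')))
    by (unfold Cminus; cdes; cunf; f_equal; ring).
  eapply Rle_trans; [apply Cabs_triangle|].
  unfold F. rewrite <- !(lin_sub Q w Hlin).
  rewrite <- mul_sub_r by auto. rewrite <- mul_sub_l by auto. rewrite <- star_sub.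
  pose proof (HF y (sb x x') (A0_sub Q x x' Hx Hx')). pose proof (HF (sb y y') x' Hx').
  lra.
Qed.

Lemma F_pair (xs ys xs' ys' : nat -> Q) a b :
  (forall n, A0 (xs n)) -> (forall n, A0 (ys n)) -> (forall n, A0 (xs' n)) -> (forall n, A0 (ys' n)) ->
  conv Q xs a -> conv Q ys b -> conv Q xs' a -> conv Q ys' b ->
  forall eps, 0 < eps -> exists N, forall n m, (N <= n)%nat -> (N <= m)%nat ->
    Cabs (Cminus (F (xs n) (ys n)) (F (xs' m) (ys' m))) < eps.
Proof.
  intros A1 A2 A3 A4 C1 C2 C3 C4 eps Heps.
  pose proof (norm_nonneg a) as Na. pose proof (norm_nonneg b) as Nb.
  set (T := M * (norm a + norm b + 2)).
  assert (HT : 0 < T) by (unfold T; apply Rmult_lt_0_compat; lra).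
  set (d := Rmin 1 (eps / (4 * T))).
  assert (Hd : 0 < d) by (unfold d; apply Rmin_pos; [lra|]; apply Rdiv_lt_0_compat; lra).
  assert (Hd1 : d <= 1) by apply Rmin_l.
  assert (Hd2 : d <= eps / (4 * T)) by apply Rmin_r.
  destruct (C1 d Hd) as [N1 H1]. destruct (C2 d Hd) as [N2 H2].
  destruct (C3 d Hd) as [N3 H3]. destruct (C4 d Hd) as [N4 H4].
  exists (N1 + N2 + N3 + N4)%nat. intros n m Hn Hm.
  specialize (H1 n ltac:(lia)). specialize (H2 n ltac:(lia)).
  specialize (H3 m ltac:(lia)). specialize (H4 m ltac:(lia)).
  pose proof (F_diff _ _ _ _ (A1 n) (A3 m) (A2 n) (A4 m)) as HD.
  pose proof (norm_sub_tri Q (xs n) a (xs' m)) as T1. rewrite (norm_sub_sym Q a) in T1.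
  pose proof (norm_sub_tri Q (ys n) b (ys' m)) as T2. rewrite (norm_sub_sym Q b) in T2.
  pose proof (norm_sub_ge Q (ys n) b). pose proof (norm_sub_ge Q (xs' m) a).
  set (p := norm (sb (xs n) (xs' m))) in *. set (q := norm (sb (ys n) (ys' m))) in *.
  assert (p <= 2 * d) by lra. assert (q <= 2 * d) by lra.
  assert (norm (ys n) <= norm b + 1) by lra. assert (norm (xs' m) <= norm a + 1) by lra.
  pose proof (norm_nonneg (ys n)). pose proof (norm_nonneg (xs' m)).
  assert (0 <= p) by apply norm_nonneg. assert (0 <= q) by apply norm_nonneg.
  assert (P1 : p * norm (ys n) <= (2 * d) * (norm b + 1)) by (apply Rmult_le_compat; lra).
  assert (P2 : q * norm (xs' m) <= (2 * d) * (norm a + 1)) by (apply Rmult_le_compat; lra).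
  assert (E1 : M * p * norm (ys n) <= M * (2 * d) * (norm b + 1)).
  { rewrite (Rmult_assoc M p), (Rmult_assoc M (2 * d)). apply Rmult_le_compat_l; lra. }
  assert (E2 : M * q * norm (xs' m) <= M * (2 * d) * (norm a + 1)).
  { rewrite (Rmult_assoc M q), (Rmult_assoc M (2 * d)). apply Rmult_le_compat_l; lra. }
  assert (E3 : M * (2 * d) * (norm b + 1) + M * (2 * d) * (norm a + 1) = 2 * d * T)
    by (unfold T; ring).
  assert (E4 : 2 * d * T <= eps / 2).
  { apply Rmult_le_compat_r with (r := T) in Hd2; [|lra].
    replace (eps / (4 * T) * T) with (eps / 4) in Hd2 by (field; lra). lra. }
  lra.
Qed.

Definition Om0 a b := Clim (fun n => F (approx Q a n) (approx Q b n)).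

Lemma Om0_key (xs ys : nat -> Q) a b : (forall n, A0 (xs n)) -> (forall n, A0 (ys n)) ->
  conv Q xs a -> conv Q ys b -> cconv (fun n => F (xs n) (ys n)) (Om0 a b).
Proof.
  intros A1 A2 C1 C2.
  assert (Hv : cconv (fun n => F (approx Q a n) (approx Q b n)) (Om0 a b)).
  { apply Clim_spec. apply Ccomplete.
    apply F_pair with a b; auto using approx_A0, conv_approx. }
  intros eps Heps.
  destruct (F_pair xs ys (approx Q a) (approx Q b) a b A1 A2 (approx_A0 Q a) (approx_A0 Q b)
              C1 C2 (conv_approx Q a) (conv_approx Q b) (eps/2)) as [N1 HN1]; [lra|].
  destruct (Hv (eps/2)) as [N2 HN2]; [lra|].
  exists (N1 + N2)%nat. intros n Hn.
  specialize (HN1 n n ltac:(lia) ltac:(lia)). specialize (HN2 n ltac:(lia)).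
  pose proof (Cminus_tri (F (xs n) (ys n)) (F (approx Q a n) (approx Q b n)) (Om0 a b)). lra.
Qed.

Lemma F_addl x x' y : A0 y -> F (add x x') y = Cadd (F x y) (F x' y).
Proof. intros. unfold F. rewrite mul_addr_l by (apply A0_star; auto). apply (lin_add Q w Hlin). Qed.
Lemma F_scall l x y : A0 y -> F (scal l x) y = Cmul l (F x y).
Proof. intros. unfold F. rewrite mul_scal_l by (apply A0_star; auto). apply (lin_scal Q w Hlin). Qed.
Lemma F_addr x y y' : A0 x -> F x (add y y') = Cadd (F x y) (F x y').
Proof. intros. unfold F. rewrite star_add, mul_addl_r by auto. apply (lin_add Q w Hlin). Qed.
Lemma F_scalr l x y : A0 x -> F x (scal l y) = Cmul (Cconj l) (F x y).
Proof. intros. unfold F. rewrite star_scal, mul_scal_r by auto. apply (lin_scal Q w Hlin). Qed.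

Ltac apA := auto using approx_A0, conv_approx, A0_add, A0_scal.

Lemma Om0_addl a a' c : Om0 (add a a') c = Cadd (Om0 a c) (Om0 a' c).
Proof.
  eapply cconv_unique.
  - apply (Om0_key (fun n => add (approx Q a n) (approx Q a' n)) (approx Q c)); intros; apA.
    apply conv_add; apA.
  - eapply cconv_ext; [|apply cconv_add; apply Om0_key; apA].
    intros n. simpl. rewrite F_addl; apA.
Qed.

Lemma Om0_scall l a c : Om0 (scal l a) c = Cmul l (Om0 a c).
Proof.
  eapply cconv_unique.
  - apply (Om0_key (fun n => scal l (approx Q a n)) (approx Q c)); intros; apA.
    apply conv_scal; apA.
  - eapply cconv_ext; [|apply cconv_mul; apply Om0_key; apA].
    intros n. simpl. rewrite F_scall; apA.
Qed.

Lemma Om0_addr a b c : Om0 a (add b c) = Cadd (Om0 a b) (Om0 a c).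
Proof.
  eapply cconv_unique.
  - apply (Om0_key (approx Q a) (fun n => add (approx Q b n) (approx Q c n))); intros; apA.
    apply conv_add; apA.
  - eapply cconv_ext; [|apply cconv_add; apply Om0_key; apA].
    intros n. simpl. rewrite F_addr; apA.
Qed.

Lemma Om0_scalr l a c : Om0 a (scal l c) = Cmul (Cconj l) (Om0 a c).
Proof.
  eapply cconv_unique.
  - apply (Om0_key (approx Q a) (fun n => scal l (approx Q c n))); intros; apA.
    apply conv_scal; apA.
  - eapply cconv_ext; [|apply cconv_mul; apply Om0_key; apA].
    intros n. simpl. rewrite F_scalr; apA.
Qed.

Lemma Om0_pos a : Cnonneg (Om0 a a).
Proof.
  apply (cconv_nonneg (fun n => F (approx Q a n) (approx Q a n))).
  - intros n. unfold F. apply HL1. apA.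
  - apply Om0_key; apA.
Qed.

Lemma Om0_module a x y : A0 x -> A0 y -> Om0 (mul a x) y = Om0 x (mul (star a) y).
Proof.
  intros Hx Hy. eapply cconv_unique.
  - apply (Om0_key (fun n => mul (approx Q a n) x) (fun _ => y)); intros.
    + apply A0_mul; apA.
    + auto.
    + apply conv_mul_r; apA.
    + apply conv_const.
  - eapply cconv_ext; [|apply (Om0_key (fun _ => x) (fun n => mul (star (approx Q a n)) y))].
    + intros n. simpl. unfold F. rewrite star_mul, star_star by auto.
      rewrite mul_assoc_l; auto. apply A0_star; auto. apA.
    + auto.
    + intros. apply A0_mul; auto. apply A0_star; apA.
    + apply conv_const.
    + apply conv_mul_r; auto. apply conv_star; apA.
Qed.

Lemma Om0_spec b y : A0 y -> Om0 b y = w (mul (star y) b).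
Proof.
  intros Hy. eapply cconv_unique.
  - apply (Om0_key (approx Q b) (fun _ => y)); intros; apA. apply conv_const.
  - unfold F. apply (conv_cconv Q w (fun n => mul (star y) (approx Q b n))); auto.
    apply conv_mul_l; apA. apply A0_star; auto.
Qed.

Lemma Om0_bound a b : Cabs (Om0 a b) <= M * norm a * norm b.
Proof.
  apply Rle_plus_epsilon. intros eps Heps.
  pose proof (norm_nonneg a) as Na. pose proof (norm_nonneg b) as Nb.
  set (T := M * (norm a + norm b + 1)).
  assert (HT : 0 < T) by (unfold T; apply Rmult_lt_0_compat; lra).
  set (d := Rmin 1 (eps / (2 * T))).
  assert (Hd : 0 < d) by (unfold d; apply Rmin_pos; [lra|]; apply Rdiv_lt_0_compat; lra).
  assert (Hd1 : d <= 1) by apply Rmin_l.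
  assert (Hd2 : d <= eps / (2 * T)) by apply Rmin_r.
  pose proof (Om0_key (approx Q a) (approx Q b) a b (approx_A0 Q a) (approx_A0 Q b)
     (conv_approx Q a) (conv_approx Q b)) as K.
  destruct (K (eps/2)) as [N1 H1]; [lra|].
  destruct (conv_approx Q a d Hd) as [N2 H2]. destruct (conv_approx Q b d Hd) as [N3 H3].
  set (n := (N1 + N2 + N3)%nat).
  specialize (H1 n ltac:(unfold n; lia)). specialize (H2 n ltac:(unfold n; lia)).
  specialize (H3 n ltac:(unfold n; lia)).
  pose proof (Cabs_minus_tri (F (approx Q a n) (approx Q b n)) (Om0 a b)) as Tr.
  pose proof (HF (approx Q b n) (approx Q a n) (approx_A0 Q a n)) as B. fold (F (approx Q a n) (approx Q b n)) in B.
  pose proof (norm_sub_ge Q (approx Q a n) a). pose proof (norm_sub_ge Q (approx Q b n) b).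
  pose proof (norm_nonneg (approx Q a n)). pose proof (norm_nonneg (approx Q b n)).
  assert (E : M * norm (approx Q b n) * norm (approx Q a n) <= M * (norm b + d) * (norm a + d)).
  { assert (norm (approx Q b n) * norm (approx Q a n) <= (norm b + d) * (norm a + d))
      by (apply Rmult_le_compat; lra).
    rewrite (Rmult_assoc M (norm (approx Q b n))), (Rmult_assoc M (norm b + d)).
    apply Rmult_le_compat_l; lra. }
  assert (E2 : M * (norm b + d) * (norm a + d) <= M * norm a * norm b + eps / 2).
  { assert (M * (norm b + d) * (norm a + d) = M * norm a * norm b + d * (M * (norm a + norm b + d))) by ring.
    assert (d * (M * (norm a + norm b + d)) <= d * T).
    { apply Rmult_le_compat_l; [lra|]. unfold T. apply Rmult_le_compat_l; lra. }
    assert (d * T <= eps / 2).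
    { apply Rmult_le_compat_r with (r := T) in Hd2; [|lra].
      replace (eps / (2 * T) * T) with (eps / 2) in Hd2 by (field; lra). lra. }
    lra. }
  lra.
Qed.

Lemma build_Om : exists Om, in_S Q Om /\ exists r : R, 0 < r /\
  forall b y, A0 y -> Om b y = Cmul (r, 0) (w (mul (star y) b)).
Proof.
  exists (fun a b => Cmul (/ M, 0) (Om0 a b)).
  assert (HiM : 0 < / M) by (apply Rinv_0_lt_compat; auto).
  split.
  - repeat split.
    + intros a b c. rewrite Om0_addl. cdes; cunf; f_equal; ring.
    + intros l a c. rewrite Om0_scall. cdes; cunf; f_equal; ring.
    + intros a b c. rewrite Om0_addr. cdes; cunf; f_equal; ring.
    + intros l a c. rewrite Om0_scalr. cdes; cunf; f_equal; ring.
    + destruct (Om0_pos a) as [H1 H2]. destruct (Om0 a a). cunf. subst. ring.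
    + destruct (Om0_pos a) as [H1 H2]. destruct (Om0 a a). cunf. subst. nra.
    + intros a x y Hx Hy. rewrite Om0_module; auto.
    + intros a b. rewrite Cabs_mul, Cabs_real, Rabs_right by lra.
      pose proof (Om0_bound a b).
      apply Rmult_le_compat_l with (r := / M) in H; [|lra].
      replace (/ M * (M * norm a * norm b)) with (norm a * norm b) in H by (field; lra). auto.
  - exists (/ M). split; auto. intros b y Hy. rewrite Om0_spec; auto.
Qed.

End Ext.

Lemma Cminus_0 z : Cminus z C0 = z.
Proof. unfold Cminus; cdes; cunf; f_equal; ring. Qed.

Section Main.
Variable Q : BanachQSA.
Implicit Types a b c d x y : Q.
Notation sb := (sub Q).

Lemma Rc_bound w : Rc Q w -> exists K, 0 <= K /\ forall a x, A0 x ->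
  Cabs (w (mul (star a) x)) <= K * norm a * (K * norm x).
Proof.
  intros [[Hlin [HL1 [HL2 HL3]]] Hc].
  destruct (baire_bound Q w Hlin Hc HL3) as [K [HK HB]].
  exists K. split; auto. apply F_bound; auto.
Qed.

Lemma Rc_Om w : Rc Q w -> exists Om, in_S Q Om /\ exists r : R, 0 < r /\
  forall b y, A0 y -> Om b y = Cmul (r, 0) (w (mul (star y) b)).
Proof.
  intros Hw. destruct (Rc_bound w Hw) as [K [HK HB]].
  destruct Hw as [[Hlin [HL1 [HL2 HL3]]] Hc].
  apply (build_Om Q w Hlin Hc HL1 (K * K + 1)).
  - nra.
  - intros a x Hx. specialize (HB a x Hx).
    pose proof (norm_nonneg a). pose proof (norm_nonneg x).
    assert (K * norm a * (K * norm x) = (K * K) * norm a * norm x) by ring.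
    assert ((K * K) * norm a * norm x <= (K * K + 1) * norm a * norm x).
    { apply Rmult_le_compat_r; auto. apply Rmult_le_compat_r; auto. lra. }
    lra.
Qed.

Lemma all_in_AR a : A_R Q a.
Proof.
  right. intros w Hw. destruct (Rc_bound w Hw) as [K [HK HB]].
  exists (approx Q a). split; [apply approx_A0|]. split.
  - intros eps Heps. destruct (conv_approx Q a eps Heps) as [N HN]. exists N. auto.
  - intros eps Heps.
    set (d := Rmin 1 (eps / (8 * (K * K + 1)))).
    assert (Hd : 0 < d) by (unfold d; apply Rmin_pos; [lra|]; apply Rdiv_lt_0_compat; nra).
    assert (Hd1 : d <= 1) by apply Rmin_l.
    assert (Hd2 : d <= eps / (8 * (K * K + 1))) by apply Rmin_r.
    destruct (conv_approx Q a d Hd) as [N HN]. exists N. intros n m Hn Hm.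
    set (u := sb (approx Q a n) (approx Q a m)).
    assert (Hu : A0 u) by (apply A0_sub; apply approx_A0).
    specialize (HB u u Hu).
    assert (Hnu : norm u <= 2 * d).
    { pose proof (norm_sub_tri Q (approx Q a n) a (approx Q a m)).
      rewrite (norm_sub_sym Q a) in H. pose proof (HN n Hn). pose proof (HN m Hm).
      unfold u. lra. }
    pose proof (norm_nonneg u).
    assert (K * norm u * (K * norm u) <= (K * K) * (2 * d) * (2 * d)).
    { replace (K * norm u * (K * norm u)) with ((K * K) * (norm u * norm u)) by ring.
      replace ((K * K) * (2 * d) * (2 * d)) with ((K * K) * ((2 * d) * (2 * d))) by ring.
      apply Rmult_le_compat_l; [nra|]. apply Rmult_le_compat; lra. }
    assert ((K * K) * (2 * d) * (2 * d) <= (K * K + 1) * (4 * d)).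
    { replace ((K * K) * (2 * d) * (2 * d)) with ((K * K) * (4 * d) * d) by ring.
      assert (0 <= K * K) by nra.
      assert ((K * K) * (4 * d) * d <= (K * K) * (4 * d) * 1).
      { apply Rmult_le_compat_l; nra. }
      nra. }
    assert ((K * K + 1) * (4 * d) <= eps / 2).
    { apply Rmult_le_compat_l with (r := 4 * (K * K + 1)) in Hd2; [|nra].
      replace (4 * (K * K + 1) * (eps / (8 * (K * K + 1)))) with (eps / 2) in Hd2 by (field; nra).
      lra. }
    lra.
Qed.

Lemma pos_on_A0plus w p : linear_functional Q w ->
  (forall x, A0 x -> Cnonneg (w (mul (star x) x))) -> A0plus Q p -> Cnonneg (w p).
Proof.
  intros Hlin HL1 [l [_ [Hl Hp]]]. subst p. induction Hl as [|x l Hx Hl IH].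
  - simpl. rewrite (lin_zero Q w Hlin). cunf; split; lra.
  - simpl. rewrite (lin_add Q w Hlin). specialize (HL1 x Hx).
    destruct (w (mul (star x) x)), (w (fold_right _ _ l)). cunf. destruct HL1, IH. split; lra.
Qed.

Lemma pos_on_Aplus w a : Rc Q w -> Aplus Q a -> Cnonneg (w a).
Proof.
  intros [[Hlin [HL1 _]] Hc] Ha.
  assert (H : forall n, exists p, A0plus Q p /\ norm (sb a p) < / (INR n + 1))
    by (intros n; apply Ha; apply RinvN_pos).
  set (ps := fun n => proj1_sig (constructive_indefinite_description _ (H n))).
  assert (Hps : forall n, A0plus Q (ps n) /\ norm (sb a (ps n)) < / (INR n + 1)).
  { intros n. unfold ps. destruct (constructive_indefinite_description _ (H n)) as [p Hp]. auto. }
  apply (cconv_nonneg (fun n => w (ps n))).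
  - intros n. apply pos_on_A0plus; auto. apply Hps.
  - apply conv_cconv; auto. intros eps Heps. destruct (arch_inv eps Heps) as [K HK].
    exists K. intros n Hn. rewrite norm_sub_sym. eapply Rlt_le_trans; [apply Hps|].
    apply Rlt_le in HK. eapply Rle_trans; [|apply HK].
    apply Rinv_le_contravar. { pose proof (pos_INR K). lra. }
    apply le_INR in Hn. lra.
Qed.

Lemma S_to_Rc Om x : in_S Q Om -> A0 x -> Rc Q (fun b => Om (mul b x) x).
Proof.
  intros [Haddl [Hscall [Haddr [Hscalr [Hpos [Hmod Hbd]]]]]] Hx.
  assert (Hdiag : forall y, A0 y -> Om (mul (mul (star y) y) x) x = Om (mul y x) (mul y x)).
  { intros y Hy. rewrite mul_assoc_l by (auto; apply A0_star; auto).
    rewrite Hmod by (auto; apply A0_mul; auto). rewrite star_star. reflexivity. }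
  split; [split; [|split; [|split]]|].
  - split.
    + intros a b. simpl. rewrite mul_addl_r by auto. apply Haddl.
    + intros l a. simpl. rewrite mul_scal_r by auto. apply Hscall.
  - intros y Hy. rewrite Hdiag by auto. apply Hpos.
  - intros z y a Hz Hy. simpl.
    rewrite <- (mul_assoc_r _ z x) by auto.
    rewrite Hmod by (first [assumption | apply A0_mul; auto]).
    rewrite star_mul_l by (apply A0_star; auto). rewrite !star_star.
    rewrite <- (mul_assoc_r a y x) by auto.
    rewrite <- (mul_assoc_r _ y x) by auto.
    rewrite (Hmod _ (mul y x) x) by (first [assumption | apply A0_mul; auto]).
    rewrite star_mul_l by (apply A0_star; auto). rewrite star_star.
    rewrite <- (mul_assoc_r (star a) z x) by auto.
    rewrite <- (Om_herm Q Om Haddl Hscall Haddr Hscalr Hpos).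
    rewrite (Hmod (star a) (mul z x) (mul y x)) by (first [assumption | apply A0_mul; auto]). rewrite star_star. reflexivity.
  - intros a. exists (sqrt (Re (Om (mul a x) (mul a x))) + 1). split.
    { pose proof (sqrt_pos (Re (Om (mul a x) (mul a x)))). lra. }
    intros z Hz. rewrite Hdiag by auto.
    rewrite <- (mul_assoc_r _ z x) by auto.
    rewrite Hmod by (first [assumption | apply A0_mul; auto]). rewrite star_star.
    eapply Rle_trans; [apply (Om_CS Q Om Haddl Hscall Haddr Hscalr Hpos)|].
    pose proof (sqrt_pos (Re (Om (mul a x) (mul a x)))).
    pose proof (sqrt_pos (Re (Om (mul z x) (mul z x)))). nra.
  - intros a eps Heps.
    set (t := eps / (norm x + 1)).
    assert (Ht : 0 < t) by (unfold t; pose proof (norm_nonneg x); apply Rdiv_lt_0_compat; lra).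
    destruct (mul_r_cont x Hx a t Ht) as [d [Hd Hdd]].
    exists d. split; auto. intros b Hb. fold (Cminus (Om (mul b x) x) (Om (mul a x) x)).
    rewrite <- (Om_subl Q Om Haddl Hscall).
    eapply Rle_lt_trans; [apply Hbd|].
    specialize (Hdd b Hb). fold (sb (mul b x) (mul a x)) in Hdd.
    pose proof (norm_nonneg x). pose proof (norm_nonneg (sb (mul b x) (mul a x))).
    assert (norm (sb (mul b x) (mul a x)) * norm x <= t * norm x)
      by (apply Rmult_le_compat_r; lra).
    assert (t * norm x < eps).
    { unfold t. apply (Rmult_lt_reg_r (norm x + 1)); [lra|].
      replace (eps / (norm x + 1) * norm x * (norm x + 1)) with (eps * norm x) by (field; lra).
      nra. }
    lra.
Qed.

Variable e : Q.
Hypothesis He : is_unit Q e.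

Lemma ss_suff : star_semisimple Q -> Rc_sufficient Q.
Proof.
  intros Hss a Ha Hne.
  destruct (Hss a Hne) as [Om [HS [Hpi Hpr]]].
  pose proof HS as [Haddl [Hscall [Haddr [Hscalr [Hpos [Hmod Hbd]]]]]].
  destruct He as [HeA Hunit].
  assert (Hy : exists y, A0 y /\ Om a y <> C0).
  { apply NNPP. intros Hn.
    assert (H0 : forall y, A0 y -> Om a y = C0).
    { intros y Hy. apply NNPP. intros Hne'. apply Hn. exists y. auto. }
    assert (HA0 : Om a a = C0).
    { apply Cabs_small_0. intros eps Heps.
      pose proof (norm_nonneg a).
      destruct (A0_dense a (eps / (norm a + 1))) as [y [Hy Hya]].
      { apply Rdiv_lt_0_compat; lra. }
      fold (sb a y) in Hya.
      pose proof (Hbd a (sb a y)).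
      rewrite (Om_subr Q Om Haddr Hscalr), (H0 y Hy) in H1.
      rewrite Cminus_0 in H1.
      pose proof (norm_nonneg (sb a y)).
      assert (norm a * norm (sb a y) <= norm a * (eps / (norm a + 1)))
        by (apply Rmult_le_compat_l; lra).
      assert (norm a * (eps / (norm a + 1)) < eps).
      { apply (Rmult_lt_reg_r (norm a + 1)); [lra|].
        replace (norm a * (eps / (norm a + 1)) * (norm a + 1)) with (eps * norm a) by (field; lra).
        nra. }
      lra. }
    rewrite HA0 in Hpr. simpl in Hpr. lra. }
  destruct Hy as [y [Hy Hay]].
  assert (Hu : exists u, A0 u /\ Om (mul a u) u <> C0).
  { apply NNPP. intros Hn.
    assert (H0 : forall u, A0 u -> Om (mul a u) u = C0).
    { intros u Hu. apply NNPP. intros Hne'. apply Hn. exists u. auto. }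
    apply Hay. destruct (Hunit a) as [Hae _]. rewrite <- Hae.
    apply (polar_C (Om (mul a e) e) (Om (mul a e) y) (Om (mul a y) e) (Om (mul a y) y)).
    - rewrite <- Haddr, <- Haddr, <- Haddl, <- mul_addr_r by auto. apply H0. apply A0_add; auto.
    - specialize (H0 (add e (scal (0,1) y)) (A0_add _ _ HeA (A0_scal _ _ Hy))).
      rewrite mul_addr_r, mul_scalr_r in H0 by (auto; apply A0_scal; auto).
      rewrite Haddl, !Haddr, !Hscall, !Hscalr in H0. exact H0.
    - apply H0; auto.
    - apply H0; auto. }
  destruct Hu as [u [Hu Hau]].
  exists (fun b => Om (mul b u) u). split.
  - apply S_to_Rc; auto.
  - pose proof (pos_on_Aplus (fun b => Om (mul b u) u) a (S_to_Rc Om u HS Hu) Ha) as P.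
    simpl in P. destruct (Om (mul a u) u) as [r1 r2]. cunf. destruct P as [P1 P2]. subst.
    split; auto. destruct P2 as [P2|P2]; auto. subst. exfalso. apply Hau. reflexivity.
Qed.

Lemma suff_ss : condition_P Q -> Rc_sufficient Q -> star_semisimple Q.
Proof.
  intros HP Hsuff a Hne. apply NNPP. intros Hno.
  destruct He as [HeA Hunit].
  assert (Hz : forall Om, in_S Q Om -> Re (Om a a) = 0).
  { intros Om HS. pose proof HS as [_ [_ [_ [_ [Hpos _]]]]].
    destruct (Hpos a) as [Hi Hr]. destruct Hr as [Hr|Hr]; [|auto].
    exfalso. apply Hno. exists Om. split; auto. split; auto. }
  assert (Hw0 : forall w, Rc Q w -> w a = C0).
  { intros w Hw. destruct (Rc_Om w Hw) as [Om [HS [r [Hr Hsp]]]].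
    pose proof HS as [Haddl [Hscall [Haddr [Hscalr [Hpos _]]]]].
    pose proof (Om_zero_diag Q Om Haddl Hscall Haddr Hscalr Hpos a e (Hz Om HS)) as E.
    rewrite Hsp in E by auto. rewrite (unit_star Q e He) in E.
    destruct (Hunit a) as [_ Hea]. rewrite Hea in E.
    destruct (w a) as [p q]. cunf. injection E; intros E1 E2.
    f_equal; nra. }
  assert (Hap : Aplus Q a).
  { apply HP. intros w Hw x Hx.
    destruct (Rc_Om w Hw) as [Om [HS [r [Hr Hsp]]]].
    pose proof (Hw0 _ (S_to_Rc Om x HS Hx)) as E. simpl in E.
    rewrite Hsp in E by auto.
    rewrite mul_assoc_mid by (auto; apply A0_star; auto).
    destruct (w (mul (star x) (mul a x))) as [p q]. cunf. injection E; intros E1 E2.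
    assert (p = 0) by nra. assert (q = 0) by nra. subst. split; lra. }
  destruct (Hsuff a Hap Hne) as [w [Hw Hpos]].
  rewrite (Hw0 w Hw) in Hpos. cunf. lra.
Qed.

End Main.

Theorem mainTheorem6 (Q : BanachQSA) (e : Q) (He : is_unit Q e) :
  (Rc_sufficient Q <-> fully_representable Q) /\
  (condition_P Q -> (Rc_sufficient Q <-> star_semisimple Q)).
Proof.
  split.
  - split.
    + intros H. split; auto. apply all_in_AR.
    + intros [H _]. auto.
  - intros HP. split.
    + apply (suff_ss Q e He HP).
    + apply (ss_suff Q e He).
Qed.
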